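(* There is an absolute constant $c>0$ such that for every $n\ge 1$ and every algorithm $M$ for uniform facility location that outputs the set of chosen facilities and is $1$-differentially private with respect to the demand set, there exists an instance (a metric space $(V,d)$ on $n$ points, a facility cost $f>0$, and a demand set $D\subseteq V$) on which $\mathbb{E}[\mathrm{cost}(M)]\ge c\sqrt n\cdot\mathrm{OPT}$.
   Context: Uniform facility location: given a metric $(V,d)$, a uniform facility opening cost $f$, and a private demand set $D\subseteq V$, a solution is a nonempty set $F\subseteq V$ of facilities with cost $\sum_{v\in D}\min_{u\in F}d(v,u)+f\,|F|$; $\mathrm{OPT}$ is the minimum cost. $M$ is $1$-differentially private if, for fixed $(V,d,f)$, for all demand sets $D,D'$ with symmetric difference one and all sets $\mathcal{O}$ of outputs, $\Pr[M(D)\in\mathcal{O}]\le e\cdot\Pr[M(D')\in\mathcal{O}]$. *)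

(* Defs.v *)
From HB Require Import structures.
From mathcomp Require Import all_boot all_order all_algebra.
From mathcomp Require Import reals Rstruct.
From Stdlib Require Rtrigo_def.
Set Implicit Arguments. Unset Strict Implicit. Unset Printing Implicit Defensive.
Import Order.TTheory GRing.Theory Num.Theory.
Local Open Scope ring_scope.

Notation R := Rdefinitions.R.

Definition is_metric (n : nat) (d : 'I_n -> 'I_n -> R) : Prop :=
  (forall x y, 0 <= d x y) /\
  (forall x y, d x y = 0 <-> x = y) /\
  (forall x y, d x y = d y x) /\
  (forall x y z, d x z <= d x y + d y z).

(* min_{u in F} d v u  (only meaningful for F nonempty; 0 for F empty). *)
Definition conn (n : nat) (d : 'I_n -> 'I_n -> R) (v : 'I_n) (F : {set 'I_n}) : R :=
  match [pick u in F] with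
  | Some u0 => \big[Num.min/d v u0]_(u in F) d v u
  | None => 0
  end.

Definition fl_cost (n : nat) (d : 'I_n -> 'I_n -> R) (f : R)
    (D F : {set 'I_n}) : R :=
  \sum_(v in D) conn d v F + f * (#|F|%:R).

(* OPT = min over nonempty F of cost(F)  (setT is nonempty when n >= 1). *)
Definition fl_opt (n : nat) (d : 'I_n -> 'I_n -> R) (f : R) (D : {set 'I_n}) : R :=
  \big[Num.min/fl_cost d f D setT]_(F : {set 'I_n} | F != set0) fl_cost d f D F.

Definition is_distr (n : nat) (mu : {set 'I_n} -> R) : Prop :=
  (forall F, 0 <= mu F) /\ \sum_(F : {set 'I_n}) mu F = 1.

Definition prob (n : nat) (mu : {set 'I_n} -> R) (O : {set {set 'I_n}}) : R :=
  \sum_(F in O) mu F.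

(* A mechanism: for each instance (d, f) and demand set D, the distribution of
   the output facility set M d f D. *)
Definition mechanism (n : nat) :=
  ('I_n -> 'I_n -> R) -> R -> {set 'I_n} -> {set 'I_n} -> R.

(* M is a valid (randomized) algorithm: outputs a nonempty facility set. *)
Definition valid_mech (n : nat) (M : mechanism n) : Prop :=
  forall d f D, is_metric d -> 0 < f ->
    is_distr (M d f D) /\ M d f D set0 = 0.

Definition dp1 (n : nat) (M : mechanism n) : Prop :=
  forall d f, is_metric d -> 0 < f ->
    forall D D' : {set 'I_n}, #|(D :\: D') :|: (D' :\: D)| = 1%N ->
      forall O : {set {set 'I_n}},
        prob (M d f D) O <= Rtrigo_def.exp 1 * prob (M d f D') O.

Definition expected_cost (n : nat) (M : mechanism n) d f D : R :=
  \sum_(F : {set 'I_n}) M d f D F * fl_cost d f D F.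

(* Main.v *)
Require Import Defs.
From HB Require Import structures.
From mathcomp Require Import all_boot all_order all_algebra.
From mathcomp Require Import reals Rstruct.
From mathcomp Require Import lra.
From Stdlib Require Rtrigo_def Rpower Exp_prop.
Import Order.TTheory GRing.Theory Num.Theory.
Local Open Scope ring_scope.

Definition dd (n : nat) (x y : 'I_n) : R := if x == y then 0 else n%:R.

Lemma dd_metric n : is_metric (@dd n).
Proof.
rewrite /is_metric /dd; split; [|split; [|split]].
- by move=> x y; case: eqP.
- move=> x y; case: eqP => // xy; split; last by move=> H; case: (xy H).
  move=> /eqP; rewrite pnatr_eq0 => /eqP n0; exfalso.
  by have := ltn_ord x; move: (nat_of_ord x) => k; rewrite n0.
- by move=> x y; rewrite eq_sym.
- have n0 : (0:R) <= n%:R by [].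
  move=> x y z; case: (eqVneq x z) => [<-|xz]; first by case: eqP => _; case: eqP => _; lra.
  case: (eqVneq x y) => [exy|_]; last by case: eqP => *; lra.
  subst y; rewrite (negbTE xz); lra.
Qed.

Lemma conn_le {n} d (v u : 'I_n) (F : {set 'I_n}) : u \in F -> conn d v F <= d v u.
Proof.
move=> uF; rewrite /conn; case: pickP => [u0 Hu0|]; last by move/(_ u); rewrite uF.
by rewrite (bigD1 u) //= ge_min lexx.
Qed.

Lemma conn_lb {n} d (v : 'I_n) (F : {set 'I_n}) a : (forall u, u \in F -> a <= d v u) ->
  F != set0 -> a <= conn d v F.
Proof.
move=> H F0; rewrite /conn; case: pickP => [u0 Hu0|H0].
  elim/big_rec: _ => [|u y Hu Hy]; first exact: H.
  by rewrite le_min Hy andbT; apply: H.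
by case/set0Pn: F0 => x; rewrite H0.
Qed.

Lemma opt_le {n} d f (D F : {set 'I_n}) : F != set0 -> fl_opt d f D <= fl_cost d f D F.
Proof. by move=> F0; rewrite /fl_opt (bigD1 F) //= ge_min lexx. Qed.

Lemma set1_neq0 {n} (v : 'I_n) : [set v] != set0.
Proof. by apply/set0Pn; exists v; rewrite inE. Qed.

Lemma e_le3 : Rtrigo_def.exp 1 <= 3.
Proof. apply/RleP; exact: Rpower.exp_le_3. Qed.

Lemma e_ge0 : 0 <= Rtrigo_def.exp 1.
Proof. apply/RleP; apply: RIneq.Rlt_le; exact: Exp_prop.exp_pos. Qed.

Theorem mainTheorem5 :
  exists c : R, 0 < c /\
  forall (n : nat), (1 <= n)%N ->
  forall M : mechanism n, valid_mech M -> dp1 M ->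
  exists (d : 'I_n -> 'I_n -> R) (f : R) (D : {set 'I_n}),
    is_metric d /\ 0 < f /\
    c * Num.sqrt (n%:R) * fl_opt d f D <= expected_cost M d f D.
Proof.
exists (1/6); split; first lra.
move=> n n1 M VM DP.
have Hm := dd_metric n.
have f1 : (0 : R) < 1 by lra.
have Hs : Num.sqrt (n%:R) <= n%:R :> R.
  have n1' : 1 <= n%:R :> R by rewrite ler1n.
  have s0 := sqrtr_ge0 (n%:R : R).
  have ss : Num.sqrt (n%:R) ^+ 2 = n%:R :> R by rewrite sqr_sqrtr //; lra.
  rewrite expr2 in ss; nra.
have s0 := sqrtr_ge0 (n%:R : R).
pose mu0 := M (@dd n) 1 set0.
pose p (v : 'I_n) := prob mu0 [set F : {set 'I_n} | v \in F].
have [D0 Ds0] := VM (@dd n) 1 set0 Hm f1.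
case: (pickP (fun v => p v <= 1/6)) => [v pv|Hp].
- exists (@dd n), 1, [set v]; split => //; split => //.
  pose muv := M (@dd n) 1 [set v].
  have [[Dv1 Dv2] Dsv] := VM (@dd n) 1 [set v] Hm f1.
  have dp := DP (@dd n) 1 Hm f1 [set v] set0.
  have /dp {}dp : #|([set v] :\: set0) :|: (set0 :\: [set v])| = 1%N.
    by rewrite setD0 set0D setU0 cards1.
  have := dp [set F : {set 'I_n} | v \in F]; rewrite -/mu0 -/(p v) => dpv.
  have p0 : 0 <= p v by apply: sumr_ge0 => F _; exact: D0.1.
  have OPT : fl_opt (@dd n) 1 [set v] <= 1.
    apply: (le_trans (opt_le _ _ _ _ (set1_neq0 v))).
    rewrite /fl_cost big_set1 cards1 mul1r.
    have := conn_le (@dd n) v v [set v] (set11 v); rewrite /dd eqxx; lra.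
  have OPT0 : 0 <= fl_opt (@dd n) 1 [set v].
    rewrite /fl_opt; elim/big_rec: _ => [|F y _ Hy].
      rewrite /fl_cost big_set1 mul1r; apply: addr_ge0 => //.
      apply: conn_lb; last by apply/set0Pn; exists v; rewrite inE.
      by move=> u _; rewrite /dd; case: eqP.
    rewrite le_min Hy andbT /fl_cost big_set1 mul1r; apply: addr_ge0 => //.
    case: (eqVneq F set0) => [->|F0]; first by rewrite /conn; case: pickP => [x|//]; rewrite inE.
    by apply: conn_lb => // u _; rewrite /dd; case: eqP.
  pose O := [set F : {set 'I_n} | v \in F].
  have cost0 : forall F, 0 <= muv F * fl_cost (@dd n) 1 [set v] F.
    move=> F; apply: mulr_ge0; first exact: Dv1.
    rewrite /fl_cost big_set1 mul1r; apply: addr_ge0 => //.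
    case: (eqVneq F set0) => [->|F0]; first by rewrite /conn; case: pickP => [x|//]; rewrite inE.
    by apply: conn_lb => // u _; rewrite /dd; case: eqP.
  have S1 : 1 - prob muv O = \sum_(F | F \notin O) muv F.
    rewrite -Dv2 (bigID (fun F => F \in O)) /= /prob.
    rewrite [X in _ - X](eq_bigl (fun F => F \in O)) //; lra.
  have LB : n%:R * (1 - prob muv O) <= expected_cost M (@dd n) 1 [set v].
    rewrite S1 mulr_sumr /expected_cost -/muv.
    rewrite [X in _ <= X](bigID (fun F => F \in O)) /=.
    have A0 : 0 <= \sum_(F | F \in O) muv F * fl_cost (@dd n) 1 [set v] F.
      by apply: sumr_ge0 => F _; apply: cost0.
    suff : \sum_(F | F \notin O) n%:R * muv F <=
           \sum_(F | F \notin O) muv F * fl_cost (@dd n) 1 [set v] F by lra.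
    apply: ler_sum => F; rewrite inE => vF.
    case: (eqVneq F set0) => [->|F0]; first by rewrite /muv Dsv mulr0 mul0r.
    rewrite mulrC; apply: ler_wpM2l; first exact: Dv1.
    rewrite /fl_cost big_set1 mul1r.
    have : n%:R <= conn (@dd n) v F.
      apply: conn_lb => // u uF; rewrite /dd; case: eqP => [E|_]; last by [].
      by move: vF; rewrite E uF.
    have : (0 : R) <= #|F|%:R by [].
    lra.
  apply: le_trans LB.
  have e3 := e_le3; have e0 := e_ge0.
  have n0 : (1 : R) <= n%:R by rewrite ler1n.
  have h1 : Rtrigo_def.exp 1 * p v <= 3 * (1/6).
    apply: le_trans (_ : 3 * p v <= _); first by apply: ler_wpM2r.
    by apply: ler_wpM2l => //; lra.
  have h2 : (1/2 : R) <= 1 - prob muv O by lra.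
  have h3 : n%:R * (1/2) <= n%:R * (1 - prob muv O) by apply: ler_wpM2l => //; lra.
  have h4 : Num.sqrt n%:R * fl_opt (@dd n) 1 [set v] <= Num.sqrt n%:R.
    by rewrite -[leRHS]mulr1; apply: ler_wpM2l.
  lra.
- exists (@dd n), 1, set0; split => //; split => //.
  have OPT : fl_opt (@dd n) 1 set0 <= 1.
    apply: (le_trans (opt_le _ _ _ _ (set1_neq0 (Ordinal n1)))).
    by rewrite /fl_cost big_set0 cards1 mul1r add0r.
  have OPT0 : 0 <= fl_opt (@dd n) 1 set0.
    rewrite /fl_opt; elim/big_rec: _ => [|F y _ Hy].
      by rewrite /fl_cost big_set0 mul1r add0r.
    by rewrite le_min Hy andbT /fl_cost big_set0 mul1r add0r.
  have E : expected_cost M (@dd n) 1 set0 = \sum_v p v.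
    rewrite /expected_cost /p /prob.
    rewrite /expected_cost /p /prob.
    have -> : \sum_v \sum_(F in [set F0 : {set 'I_n} | v \in F0]) mu0 F =
      \sum_v \sum_(F : {set 'I_n}) (if v \in F then mu0 F else 0).
      apply: eq_bigr => v _; rewrite big_mkcond /=.
      by apply: eq_bigr => F _; rewrite inE.
    rewrite exchange_big /=; apply: eq_bigr => F _.
    rewrite /fl_cost big_set0 add0r mul1r -/mu0.
    rewrite -big_mkcond /= sumr_const mulr_natr //.
  rewrite E.
  have : \sum_(v < n) (1/6 : R) <= \sum_v p v.
    apply: ler_sum => v _; have := Hp v; rewrite /= => /negbT; rewrite -ltNge; lra.
  rewrite sumr_const card_ord => H.
  have : (1/6 : R) *+ n = n%:R / 6 by rewrite -mulr_natl; lra.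
  have h4 : Num.sqrt n%:R * fl_opt (@dd n) 1 set0 <= Num.sqrt n%:R.
    by rewrite -[leRHS]mulr1; apply: ler_wpM2l.
  lra.
Qed.
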